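(* If $G=(U,E)$ is a path, then there exists a category system $\mathcal S\subset 2^U$ such that $(G,\mathcal S)$ is shattered and internally connected and $\operatorname{memdim}(\mathcal S)=\operatorname{diam}(G)$.
   Context: For $u\in U$ let $\mathrm{cat}(u)=\{C\in\mathcal S: u\in C\}$; $\operatorname{memdim}(\mathcal S)=\max_{u\in U}|\mathrm{cat}(u)|$. $\operatorname{diam}(G)$ is the maximum shortest-path distance between two vertices of $G$. $N(s)$ is the neighbor set of $s$. $(G,\mathcal S)$ is internally connected if for every $C\in\mathcal S$ the subgraph of $G$ induced by $C$ is connected. $(G,\mathcal S)$ is shattered if for all $s\neq t$ in $U$ there exist $u\in N(s)$ and $C\in\mathcal S$ with $u,t\in C$ and $s\notin C$ (possibly $u=t$). *)

(* Defs.v *)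
From mathcomp Require Import all_boot.
Set Implicit Arguments.
Unset Strict Implicit.
Unset Printing Implicit Defensive.

Section Graphs.
Variable T : finType.
Variable e : rel T.

Definition is_path_graph : Prop :=
  0 < #|T| /\
  exists f : 'I_#|T| -> T, bijective f /\
    forall i j : 'I_#|T|, e (f i) (f j) = (i.+1 == j) || (j.+1 == i).

Definition walkb (x y : T) (n : nat) : bool :=
  [exists p : n.-tuple T, path e x p && (last x p == y)].

(* shortest-path distance; a shortest walk in a connected graph has
   fewer than #|T| edges; the value #|T| stands for "infinity". *)
Definition dist (x y : T) : nat :=
  \big[minn/#|T|]_(n < #|T| | walkb x y n) n.

Definition diam : nat := \max_(x : T) \max_(y : T) dist x y.

Definition nbhd (s : T) : {set T} := [set u | e s u].

Definition cat (S : {set {set T}}) (u : T) : {set {set T}} :=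
  [set C in S | u \in C].
Definition memdim (S : {set {set T}}) : nat := \max_(u : T) #|cat S u|.

Definition induced_connected (C : {set T}) : Prop :=
  forall x y, x \in C -> y \in C ->
    connect (fun a b => [&& e a b, a \in C & b \in C]) x y.

Definition internally_connected (S : {set {set T}}) : Prop :=
  forall C, C \in S -> induced_connected C.

Definition shattered (S : {set {set T}}) : Prop :=
  forall s t : T, s != t ->
    exists u : T, exists C : {set T},
      [/\ u \in nbhd s, C \in S, u \in C, t \in C & s \notin C].
End Graphs.

(* Main.v *)
Require Import Defs.
From mathcomp Require Import all_boot.
From mathcomp Require Import zify.

Set Implicit Arguments.
Unset Strict Implicit.
Unset Printing Implicit Defensive.

Lemma bigmin_le (I : eqType) (r : seq I) (P : pred I) (F : I -> nat) a i0 :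
  i0 \in r -> P i0 -> \big[minn/a]_(i <- r | P i) F i <= F i0.
Proof.
elim: r => [|x r IH] //; rewrite in_cons big_cons => /orP [/eqP <-|Hi] HP.
  by rewrite HP geq_minl.
case: (P x); last exact: IH.
by apply: leq_trans (geq_minr _ _) (IH Hi HP).
Qed.

Section Main.
Variable T : finType.
Variable e : rel T.
Hypothesis hn : 0 < #|T|.
Variable f : 'I_#|T| -> T.
Variable g0 : T -> 'I_#|T|.
Hypothesis fK : cancel f g0.
Hypothesis gK : cancel g0 f.
Hypothesis hf : forall i j : 'I_#|T|, e (f i) (f j) = (i.+1 == j) || (j.+1 == i).

Let n := #|T|.
Definition g x : nat := val (g0 x).
Definition F (k : nat) : T := f (insubd (Ordinal hn) k).

Lemma gF k : k < n -> g (F k) = k.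
Proof. by move=> hk; rewrite /g /F fK val_insubd hk. Qed.

Lemma Fg x : F (g x) = x.
Proof.
rewrite /F /g -{2}(gK x); congr f; apply: val_inj.
by rewrite val_insubd ltn_ord.
Qed.

Lemma gn x : g x < n.
Proof. exact: ltn_ord. Qed.

Lemma edge x y : e x y = ((g x).+1 == g y) || ((g y).+1 == g x).
Proof. by rewrite -{1}(gK x) -{1}(gK y) hf. Qed.

Lemma edgeF k : k.+1 < n -> e (F k) (F k.+1) /\ e (F k.+1) (F k).
Proof.
move=> hk; rewrite !edge !gF //; try lia; by rewrite eqxx /= ?orbT.
Qed.

Lemma walk_seq x y (p : seq T) :
  path e x p -> last x p = y -> walkb e x y (size p).
Proof.
move=> hp hl; apply/existsP; exists (in_tuple p) => /=.
by rewrite hp hl eqxx.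
Qed.

Lemma walk_fwd k i : i + k < n ->
  exists p : seq T, [/\ path e (F i) p, last (F i) p = F (i + k) & size p = k].
Proof.
elim: k i => [|k IH] i hk.
  by exists [::]; rewrite addn0.
have [p [hp hl hs]] := IH i.+1 ltac:(lia).
exists (F i.+1 :: p); split => //=.
  by rewrite hp andbT; case: (edgeF (k:=i) ltac:(lia)).
by rewrite hl addSnnS.
by rewrite hs.
Qed.

Lemma walk_bwd k i : i + k < n ->
  exists p : seq T, [/\ path e (F (i + k)) p, last (F (i + k)) p = F i & size p = k].
Proof.
elim: k i => [|k IH] i hk.
  by exists [::]; rewrite addn0.
have [p [hp hl hs]] := IH i ltac:(lia).
exists (F (i + k) :: p); split => //=.
  rewrite hp andbT.
  have := edgeF (k:=i + k) ltac:(lia). rewrite addnS. by case.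
by rewrite hs.
Qed.

Lemma walk_lower (p : seq T) x : path e x p -> g (last x p) <= g x + size p.
Proof.
elim: p x => [|y p IH] x /=; first by rewrite addn0.
move=> /andP [hxy hp]; have := IH y hp; move: hxy; rewrite edge.
move=> /orP [/eqP|/eqP]; lia.
Qed.

Lemma dist_le x y m : walkb e x y m -> m < n -> dist e x y <= m.
Proof.
move=> hw hm; rewrite /dist.
have := @bigmin_le _ (index_enum 'I_#|T|) (fun i : 'I_#|T| => walkb e x y i)
  (fun i : 'I_#|T| => nat_of_ord i) #|T| (Ordinal hm).
by rewrite mem_index_enum /=; apply.
Qed.

Lemma dist_ge x y : g y - g x <= dist e x y.
Proof.
rewrite /dist; apply: (big_ind (fun v => g y - g x <= v)).
- have := gn y; rewrite /n; lia.
- by move=> a b ha hb; rewrite leq_min ha hb.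
- move=> i /existsP [p /andP [hp /eqP hl]].
  have := walk_lower hp; rewrite hl size_tuple; lia.
Qed.

Lemma dist_bound x y : dist e x y <= n.-1.
Proof.
have hx := gn x; have hy := gn y.
case: (leqP (g x) (g y)) => hxy.
  have [p [hp hl hs]] := walk_fwd (k := g y - g x) (i := g x) ltac:(lia).
  rewrite Fg in hp hl; rewrite subnKC // Fg in hl.
  have := dist_le (walk_seq hp hl); rewrite hs => h.
  apply: leq_trans (h ltac:(lia)) _; lia.
have [p [hp hl hs]] := walk_bwd (k := g x - g y) (i := g y) ltac:(lia).
rewrite subnKC ?Fg in hp hl; last lia.
have := dist_le (walk_seq hp hl); rewrite hs => h.
apply: leq_trans (h ltac:(lia)) _; lia.
Qed.

Lemma diamE : diam e = n.-1.
Proof.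
apply/eqP; rewrite eqn_leq; apply/andP; split.
  apply/bigmax_leqP => x _; apply/bigmax_leqP => y _; exact: dist_bound.
rewrite /diam.
apply: (leq_trans _ (@leq_bigmax _ (fun x => \max_(y : T) dist e x y) (F 0))).
apply: (leq_trans _ (@leq_bigmax _ (fun y => dist e (F 0) y) (F n.-1))).
apply: (leq_trans _ (dist_ge _ _)).
rewrite !gF; lia.
Qed.

Definition h (u : T) (k : nat) : {set T} := [set x | (g x <= k) == (g u <= k)].

Definition S : {set {set T}} := [set h u (val k) | u : T, k : 'I_n.-1].

Lemma memh x u k : (x \in h u k) = ((g x <= k) == (g u <= k)).
Proof. by rewrite inE. Qed.

Lemma catE u : Defs.cat S u = [set h u (val k) | k : 'I_n.-1].
Proof.
apply/setP => C; rewrite inE; apply/andP/imsetP.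
  move=> [/imset2P [v k _ _ ->] hu]; exists k => //.
  apply/setP => x; rewrite !memh; rewrite memh in hu.
  by rewrite (eqP hu).
move=> [k _ ->]; split; last by rewrite memh.
by apply/imset2P; exists u k.
Qed.

Lemma h_inj u : injective (fun k : 'I_n.-1 => h u (val k)).
Proof.
move=> k k' /= hk; apply/val_inj/eqP/negPn/negP => hne.
have hk1 := ltn_ord k.
have sep : forall j m, j.+1 < n -> m < n ->
   ((F j \in h u m) != (F j.+1 \in h u m)) = (j == m).
  move=> j m hj hm; rewrite !memh gF; last lia; rewrite gF; last lia.
  case: (g u <= m); case: (leqP j m) => hjm; case: (leqP j.+1 m) => hjm';
    case: eqP => /=; lia.
have hk1' : val k < n - 1 by rewrite subn1; exact: ltn_ord.
have hk2 : val k' < n - 1 by rewrite subn1; exact: ltn_ord.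
have e1 := sep (val k) (val k) ltac:(lia) ltac:(lia).
have e2 := sep (val k) (val k') ltac:(lia) ltac:(lia).
rewrite hk e2 eqxx in e1.
by rewrite e1 in hne.
Qed.

Lemma memdimE : memdim S = n.-1.
Proof.
have hc : forall u, #|Defs.cat S u| = n.-1.
  by move=> u; rewrite catE card_imset ?card_ord //; apply: h_inj.
apply/eqP; rewrite eqn_leq; apply/andP; split.
  by apply/bigmax_leqP => u _; rewrite hc.
by rewrite /memdim; apply: (leq_trans _ (@leq_bigmax _ (fun u => #|Defs.cat S u|) (F 0))); rewrite hc.
Qed.

Lemma conn_int (C : {set T}) :
  (forall i m j, i <= m <= j -> j < n -> F i \in C -> F j \in C -> F m \in C) ->
  induced_connected e C.
Proof.
move=> conv.
set r := (fun a b => [&& e a b, a \in C & b \in C]).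
have fwd : forall d i, i + d < n -> F i \in C -> F (i + d) \in C ->
    connect r (F i) (F (i + d)) /\ connect r (F (i + d)) (F i).
  elim=> [|d IH] i hd hi hj; first by rewrite addn0; split; apply: connect0.
  have hi1 : F i.+1 \in C by apply: (conv i i.+1 (i + d.+1)) => //; lia.
  have [IH1 IH2] := IH i.+1 ltac:(lia) hi1 ltac:(by rewrite addSnnS).
  have [e1 e2] := edgeF (k := i) ltac:(lia).
  rewrite -addSnnS; split.
    apply: connect_trans _ IH1; apply: connect1; by rewrite /r e1 hi hi1.
  apply: connect_trans IH2 _; apply: connect1; by rewrite /r e2 hi hi1.
move=> x y hx hy.
rewrite -(Fg x) -(Fg y) in hx hy *.
have := gn x; have := gn y => hy' hx'.
case: (leqP (g x) (g y)) => hxy.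
  have := fwd (g y - g x) (g x) ltac:(lia); rewrite subnKC //.
  by move=> /(_ hx hy) [].
have := fwd (g x - g y) (g y) ltac:(lia); rewrite subnKC; last lia.
by move=> /(_ hy hx) [].
Qed.

Lemma main_ok :
  [/\ shattered e S, internally_connected e S & memdim S = diam e].
Proof.
split.
- move=> s t hst.
  have hs := gn s; have ht := gn t.
  have hne : g s != g t.
    by apply: contra hst => /eqP H; rewrite -(Fg s) -(Fg t) H.
  case: (ltngtP (g s) (g t)) => hc; last by rewrite hc eqxx in hne.
  + have hk : g s < n.-1 by lia.
    exists (F (g s).+1), (h (F (g s).+1) (g s)); split.
    * rewrite inE -{1}(Fg s); by case: (edgeF (k := g s) ltac:(lia)).
    * by apply/imset2P; exists (F (g s).+1) (Ordinal hk).
    * by rewrite memh.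
    * rewrite memh gF; last lia. apply/eqP; lia.
    * rewrite memh gF; last lia. apply/negP => /eqP; lia.
  + have hk : (g s).-1 < n.-1 by lia.
    exists (F (g s).-1), (h (F (g s).-1) (g s).-1); split.
    * rewrite inE -{1}(Fg s).
      have := edgeF (k := (g s).-1) ltac:(lia).
      by rewrite prednK; [case|lia].
    * by apply/imset2P; exists (F (g s).-1) (Ordinal hk).
    * by rewrite memh.
    * rewrite memh gF; last lia. apply/eqP; lia.
    * rewrite memh gF; last lia. apply/negP => /eqP; lia.
- move=> C /imset2P [u k _ _ ->]; apply: conn_int => i m j hij hj.
  rewrite !memh gF; last lia; rewrite gF; last lia; rewrite gF; last lia.
  case: (g u <= k); case: (leqP i k); case: (leqP j k); case: (leqP m k) => //=; lia.
- by rewrite memdimE diamE.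
Qed.

End Main.

Theorem lemma4 (T : finType) (e : rel T) :
  is_path_graph e ->
  exists S : {set {set T}},
    [/\ shattered e S, internally_connected e S & memdim S = diam e].
Proof.
move=> [hn [f [[g0 fK gK] hf]]].
eexists; exact: (main_ok hn fK gK hf).
Qed.
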